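(* Let $\mathcal{M}=(K,G,A,(\gamma')_{\gamma\in\Gamma},(\delta')_{\delta\in\Delta})$ be a model of $T$ and let $K'=\mathbb{Q}\big(\{\operatorname{Re}(\gamma'\delta'):\gamma\in\Gamma,\delta\in\Delta\}\big)^{\mathrm{rc}}\subseteq K$. Then $\lambda((K')^{>0})=\Delta'$.
   Context: $T$ is the theory of structures $(K,G,A,(\gamma')_{\gamma\in\Gamma},(\delta')_{\delta\in\Delta})$ (for a fixed finite rank $\Gamma\le\mathbb{S}^1$ and $\Delta=\varepsilon^{\mathbb{Z}}$, real $\varepsilon>1$) with $K$ real closed, $A\le K^{>0}$ having $\varepsilon'$ as least element $>1$, $G$ a dense subgroup of $\mathbb{S}^1(K)$, for all $k\in K^{>0}$ some $a\in A$ with $a\le k<a\varepsilon'$, $\gamma\mapsto\gamma'$ and $\delta\mapsto\delta'$ homomorphisms into $G$ and $A$, the orientation axioms (for all $Q\in\mathbb{Z}[x_1,\dots,x_n]$, $Q(\operatorname{Re}(\gamma_1'\delta_1'),\dots)>0$ in $K$ iff $Q(\operatorname{Re}(\gamma_1\delta_1),\dots)>0$ in $\mathbb{R}$), the Mann axioms, and torsion of $G$ equal to the image of torsion of $\Gamma$. $F^{\mathrm{rc}}$ is the real closure inside $K$. $\lambda:K^{>0}\to A$ sends $k$ to the unique $a\in A$ with $a\le k<a\varepsilon'$; $\Delta'=\{\delta':\delta\in\Delta\}$. *)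

(* Defs.v *)
From Stdlib Require Import Reals ZArith.
From Stdlib Require QArith.QArith_base Reals.Qreals.
From HB Require Import structures.
From mathcomp Require Import all_boot all_order all_algebra.
Set Implicit Arguments. Unset Strict Implicit. Unset Printing Implicit Defensive.
Import Order.TTheory GRing.Theory Num.Theory.

Definition cmulR (z w : R * R) : R * R :=
  (Rminus (Rmult z.1 w.1) (Rmult z.2 w.2), Rplus (Rmult z.1 w.2) (Rmult z.2 w.1)).
Definition coneR : R * R := (R1, R0).
(* inverse of a point of the unit circle = complex conjugate *)
Definition cinvR (z : R * R) : R * R := (z.1, Ropp z.2).
Definition onS1R (z : R * R) : Prop := Rplus (Rmult z.1 z.1) (Rmult z.2 z.2) = R1.
Fixpoint cpowR (z : R * R) (n : nat) : R * R :=
  match n with O => coneR | S m => cmulR (cpowR z m) z end.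
Definition czpowR (z : R * R) (k : Z) : R * R :=
  match k with
  | Z0 => coneR
  | Zpos p => cpowR z (Pos.to_nat p)
  | Zneg p => cinvR (cpowR z (Pos.to_nat p)) end.
Fixpoint gprodR (r : nat) (gen : nat -> R * R) (k : nat -> Z) : R * R :=
  match r with O => coneR | S m => cmulR (gprodR m gen k) (czpowR (gen m) (k m)) end.

Definition subgroup_S1R (Gam : R * R -> Prop) : Prop :=
  (forall z, Gam z -> onS1R z) /\ Gam coneR /\
  (forall z w, Gam z -> Gam w -> Gam (cmulR z w)) /\
  (forall z, Gam z -> Gam (cinvR z)).

Definition finite_rank (Gam : R * R -> Prop) : Prop :=
  exists (r : nat) (gen : nat -> R * R),
    (forall i, (i < r)%N -> Gam (gen i)) /\
    forall z, Gam z -> exists (n : nat) (k : nat -> Z),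
      (0 < n)%N /\ cpowR z n = gprodR r gen k.

Definition inDelta (eps x : R) : Prop := exists z : Z, x = powerRZ eps z.

Inductive zpoly : Type :=
| ZPOne : zpoly
| ZPVar : nat -> zpoly
| ZPAdd : zpoly -> zpoly -> zpoly
| ZPMul : zpoly -> zpoly -> zpoly
| ZPNeg : zpoly -> zpoly.

Fixpoint evalR (e : nat -> R) (p : zpoly) : R :=
  match p with
  | ZPOne => R1
  | ZPVar i => e i
  | ZPAdd p q => Rplus (evalR e p) (evalR e q)
  | ZPMul p q => Rmult (evalR e p) (evalR e q)
  | ZPNeg p => Ropp (evalR e p) end.

Local Open Scope ring_scope.

Fixpoint evalK (K : rcfType) (e : nat -> K) (p : zpoly) : K :=
  match p with
  | ZPOne => 1
  | ZPVar i => e i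
  | ZPAdd p q => evalK e p + evalK e q
  | ZPMul p q => evalK e p * evalK e q
  | ZPNeg p => - evalK e p end.

Section KSide.
Variable K : rcfType.

Definition cmulK (z w : K * K) : K * K :=
  (z.1 * w.1 - z.2 * w.2, z.1 * w.2 + z.2 * w.1).
Definition coneK : K * K := (1, 0).
Definition cinvK (z : K * K) : K * K := (z.1, - z.2).
Definition onS1K (z : K * K) : Prop := z.1 ^+ 2 + z.2 ^+ 2 = 1.
Fixpoint cpowK (z : K * K) (n : nat) : K * K :=
  match n with O => coneK | S m => cmulK (cpowK z m) z end.

Definition subgroup_S1K (G : K * K -> Prop) : Prop :=
  (forall z, G z -> onS1K z) /\ G coneK /\
  (forall z w, G z -> G w -> G (cmulK z w)) /\
  (forall z, G z -> G (cinvK z)).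

Definition dense_in_S1K (G : K * K -> Prop) : Prop :=
  forall z (e : K), onS1K z -> 0 < e ->
    exists g, G g /\ `|g.1 - z.1| < e /\ `|g.2 - z.2| < e.

Definition subgroup_posK (A : K -> Prop) : Prop :=
  (forall a, A a -> 0 < a) /\ A 1 /\
  (forall a b, A a -> A b -> A (a * b)) /\ (forall a, A a -> A a^-1).

Definition Z2K (z : Z) : K :=
  match z with
  | Z0 => 0
  | Zpos p => (Pos.to_nat p)%:R
  | Zneg p => - (Pos.to_nat p)%:R end.
Definition Q2K (q : QArith_base.Q) : K :=
  Z2K (QArith_base.Qnum q) / (Pos.to_nat (QArith_base.Qden q))%:R.

Definition linsumK (n : nat) (a : nat -> QArith_base.Q) (I : nat -> bool)
    (g : nat -> K * K) : K * K :=
  (\sum_(i < n | I i) Q2K (a i) * (g i).1, \sum_(i < n | I i) Q2K (a i) * (g i).2).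

Definition nondegK (n : nat) (a : nat -> QArith_base.Q) (g : nat -> K * K) : Prop :=
  forall I : nat -> bool, (exists i, (i < n)%N /\ I i) -> linsumK n a I g <> (0, 0).

Inductive gen_field (S : K -> Prop) : K -> Prop :=
| gf_base x : S x -> gen_field S x
| gf_zero : gen_field S 0
| gf_one : gen_field S 1
| gf_add x y : gen_field S x -> gen_field S y -> gen_field S (x + y)
| gf_opp x : gen_field S x -> gen_field S (- x)
| gf_mul x y : gen_field S x -> gen_field S y -> gen_field S (x * y)
| gf_inv x : gen_field S x -> gen_field S x^-1.

(* (Q(S))^rc inside K: elements of K algebraic over the field Q(S)
   (the relative algebraic closure, which is the real closure of Q(S) in K) *)
Definition rc_in (S : K -> Prop) (x : K) : Prop :=
  exists p : {poly K}, p != 0 /\ (forall i, gen_field S p`_i) /\ root p x.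

Definition is_lambda (A : K -> Prop) (eps' k a : K) : Prop :=
  A a /\ a <= k /\ k < a * eps'.

End KSide.

Fixpoint linsumR (n : nat) (a : nat -> QArith_base.Q) (I : nat -> bool)
    (g : nat -> R * R) : R * R :=
  match n with
  | O => (R0, R0)
  | S m => let s := linsumR m a I g in
      if I m then (Rplus s.1 (Rmult (Q2R (a m)) (g m).1),
                   Rplus s.2 (Rmult (Q2R (a m)) (g m).2))
      else s end.

Definition nondegR (n : nat) (a : nat -> QArith_base.Q) (g : nat -> R * R) : Prop :=
  forall I : nat -> bool, (exists i, (i < n)%N /\ I i) -> linsumR n a I g <> (R0, R0).

Definition model_T (eps : R) (Gam : R * R -> Prop)
    (K : rcfType) (G : K * K -> Prop) (A : K -> Prop)
    (gp : R * R -> K * K) (dp : R -> K) : Prop :=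
  let eps' := dp eps in
  subgroup_S1K G /\ dense_in_S1K G /\
  subgroup_posK A /\ A eps' /\ 1 < eps' /\ (forall a, A a -> 1 < a -> eps' <= a) /\
  (forall k : K, 0 < k -> exists a, A a /\ a <= k /\ k < a * eps') /\
  (forall g, Gam g -> G (gp g)) /\
  (forall g h, Gam g -> Gam h -> gp (cmulR g h) = cmulK (gp g) (gp h)) /\
  (forall d, inDelta eps d -> A (dp d)) /\
  (forall d e, inDelta eps d -> inDelta eps e -> dp (Rmult d e) = dp d * dp e) /\
  (* orientation axioms; Re(gamma' delta') = delta' * Re gamma' *)
  (forall (Q : zpoly) (g : nat -> R * R) (d : nat -> R),
     (forall i, Gam (g i)) -> (forall i, inDelta eps (d i)) ->
     (0 < evalK (fun i => dp (d i) * (gp (g i)).1) Q <->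
      Rlt R0 (evalR (fun i => Rmult (d i) (g i).1) Q))) /\
  (forall (n : nat) (a : nat -> QArith_base.Q) (g : nat -> K * K),
     (forall i, (i < n)%N -> G (g i)) ->
     linsumK n a (fun _ => true) g = coneK K -> nondegK n a g ->
     exists gam : nat -> R * R,
       (forall i, (i < n)%N -> Gam (gam i)) /\
       linsumR n a (fun _ => true) gam = coneR /\ nondegR n a gam /\
       (forall i, (i < n)%N -> g i = gp (gam i))) /\
  (forall x : K * K,
     (G x /\ exists n, (0 < n)%N /\ cpowK x n = coneK K) <->
     (exists gam, Gam gam /\ (exists n, (0 < n)%N /\ cpowR gam n = coneR) /\
                  x = gp gam)).

(* Main.v *)
Require Import Defs.
From Stdlib Require Import Reals ZArith.
From Stdlib Require Lra Psatz.
From HB Require Import structures.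
From mathcomp Require Import all_boot all_order all_algebra.
From mathcomp Require Import ring lra.
Import Order.TTheory GRing.Theory Num.Theory.
Local Open Scope ring_scope.

Lemma UB (K : rcfType) (n : nat) (c : nat -> K) (k B : K) :
  0 < k -> 0 < B ->
  (forall i, (i <= n)%N -> `|c i| < B /\ (c i != 0 -> 1 < `|c i| * B)) ->
  (exists i, (i <= n)%N /\ c i != 0) ->
  \sum_(i < n.+1) c i * k ^+ i = 0 -> k < 1 + n%:R * B ^+ 2.
Proof.
move=> k0 B0; elim: n => [|m IH] Hb [i [Hi Hci]] Hs.
  move: Hs; rewrite big_ord_recr big_ord0 /= add0r expr0 mulr1 => Hs.
  by move: Hi Hci; rewrite leqn0 => /eqP ->; rewrite Hs eqxx.
have HB2 : 0 <= B ^+ 2 by rewrite exprn_ge0 // ltW.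
have [Hc|Hc] := eqVneq (c m.+1) 0.
  have Hi' : (i <= m)%N.
    rewrite leq_eqVlt in Hi; case/orP: Hi => [/eqP Ei|//]; by move: Hci; rewrite Ei Hc eqxx.
  have := IH (fun j Hj => Hb j (leqW Hj)) (ex_intro _ i (conj Hi' Hci)).
  move: Hs; rewrite big_ord_recr /= Hc mul0r addr0 => Hs /(_ Hs) Hk.
  apply: (lt_le_trans Hk); rewrite lerD2l ler_wpM2r // ler_nat; exact: leqnSn.
have [Hk1|Hk1] := ltP k 1.
  apply: (lt_le_trans Hk1); rewrite lerDl mulr_ge0 //.
have [HcB HcB1] := Hb m.+1 (leqnn _).
have HcB1' := HcB1 Hc.
move: Hs; rewrite big_ord_recr /= => Hs.
have Heq : c m.+1 * k ^+ m.+1 = - \sum_(i < m.+1) c i * k ^+ i.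
  by apply: (addrI (\sum_(i < m.+1) c i * k ^+ i)); rewrite Hs subrr.
have Hle : `|c m.+1 * k ^+ m.+1| <= m.+1%:R * B * k ^+ m.
  rewrite Heq normrN.
  apply: (le_trans (ler_norm_sum _ _ _)).
  have -> : m.+1%:R * B * k ^+ m = \sum_(i < m.+1) B * k ^+ m.
    by rewrite sumr_const card_ord -mulrA mulr_natl.
  apply: ler_sum => j _; rewrite normrM; apply: ler_pM => //.
  - by rewrite ltW // (Hb j (leqW (ltn_ord j))).1.
  - rewrite ger0_norm; last by rewrite exprn_ge0 // ltW.
    apply: ler_weXn2l => //; by rewrite -ltnS.
rewrite normrM (ger0_norm (exprn_ge0 _ (ltW k0))) in Hle.
have Hkm : 0 < k ^+ m by rewrite exprn_gt0.
have Hle2 : `|c m.+1| * k <= m.+1%:R * B.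
  rewrite -(ler_pM2r Hkm) -mulrA -exprS; exact: Hle.
have Hcnn : 0 <= `|c m.+1| by [].
nra.
Qed.

Lemma LB (K : rcfType) (n : nat) (c : nat -> K) (k B : K) :
  0 < k -> 0 < B ->
  (forall i, (i <= n)%N -> `|c i| < B /\ (c i != 0 -> 1 < `|c i| * B)) ->
  (exists i, (i <= n)%N /\ c i != 0) ->
  \sum_(i < n.+1) c i * k ^+ i = 0 -> k^-1 < 1 + n%:R * B ^+ 2.
Proof.
move=> k0 B0 Hb [i0 [Hi0 Hc0]] Hs.
apply: (@UB K n (fun i => c (n - i)%N) k^-1 B) => //.
- by rewrite invr_gt0.
- move=> i Hi; apply: Hb; exact: leq_subr.
- by exists (n - i0)%N; rewrite leq_subr subKn.
rewrite (reindex_inj rev_ord_inj) /=.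
have kn0 : k != 0 by rewrite gt_eqF.
have E : forall i : 'I_n.+1, c (n - (n.+1 - i.+1))%N * k^-1 ^+ (n.+1 - i.+1) = c i * k ^+ i * k^-1 ^+ n.
  move=> i; have Hi : (i <= n)%N by rewrite -ltnS.
  rewrite subSS (subKn Hi) -mulrA; congr (_ * _).
  have -> : k^-1 ^+ n = k^-1 ^+ (n - i) * k^-1 ^+ i by rewrite -exprD subnK.
  rewrite mulrCA [k^-1 ^+ i]exprVn mulfV ?mulr1 //.
  by rewrite expf_eq0 (negbTE kn0) andbF.
rewrite (eq_bigr _ (fun i _ => E i)).
by rewrite -mulr_suml Hs mul0r.
Qed.
Lemma boundK (K : rcfType) (p q M : K) : q != 0 -> 0 < M ->
  0 < M * M * (q * q) + - (p * p) -> `|p / q| < M.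
Proof.
move=> q0 M0 H.
set x := p / q.
have hp : p = x * q by rewrite /x divfK.
have hq : 0 < q * q by rewrite -expr2 exprn_even_gt0 //= q0.
have hx : `|x| * `|x| = x * x by rewrite -!expr2 real_normK ?num_real.
have hx0 : 0 <= `|x| by [].
rewrite hp in H.
have H' : 0 < (M * M - x * x) * (q * q) by rewrite mulrBl; lra.
have H2 : x * x < M * M by rewrite -subr_gt0 -(pmulr_lgt0 _ hq).
nra.
Qed.

Lemma boundK2 (K : rcfType) (p q M : K) : q != 0 -> p != 0 -> 0 < M ->
  0 < M * M * (p * p) + - (q * q) -> 1 < `|p / q| * M.
Proof.
move=> q0 p0 M0 H.
set x := p / q.
have hp : p = x * q by rewrite /x divfK.
have hq : 0 < q * q by rewrite -expr2 exprn_even_gt0 //= q0.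
have hx : `|x| * `|x| = x * x by rewrite -!expr2 real_normK ?num_real.
have hx0 : 0 <= `|x| by [].
rewrite hp in H.
have H' : 0 < (M * M * (x * x) - 1) * (q * q) by rewrite mulrBl; lra.
have H2 : 1 < M * M * (x * x) by rewrite -subr_gt0 -(pmulr_lgt0 _ hq).
have hy : (`|x| * M) * (`|x| * M) = M * M * (x * x).
  by rewrite -hx; ring.
have hy0 : 0 <= `|x| * M by rewrite mulr_ge0 // ltW.
move: hy hy0 H2; set y := `|x| * M => hy hy0 H2.
nra.
Qed.

Fixpoint zren (f : nat -> nat) (p : zpoly) : zpoly :=
  match p with
  | ZPOne => ZPOne
  | ZPVar i => ZPVar (f i)
  | ZPAdd p q => ZPAdd (zren f p) (zren f q)
  | ZPMul p q => ZPMul (zren f p) (zren f q)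
  | ZPNeg p => ZPNeg (zren f p) end.

Lemma evalK_ren (K : rcfType) (e : nat -> K) f p :
  evalK e (zren f p) = evalK (fun i => e (f i)) p.
Proof. by elim: p => //= [p IHp q IHq|p IHp q IHq|p IHp]; rewrite ?IHp ?IHq. Qed.

Lemma evalR_ren (e : nat -> R) f p :
  evalR e (zren f p) = evalR (fun i => e (f i)) p.
Proof. by elim: p => //= [p IHp q IHq|p IHp q IHq|p IHp]; rewrite ?IHp ?IHq. Qed.

Lemma evalK_ext (K : rcfType) (e e' : nat -> K) p :
  (forall i, e i = e' i) -> evalK e p = evalK e' p.
Proof. by move=> H; elim: p => //= [p IHp q IHq|p IHp q IHq|p IHp]; rewrite ?IHp ?IHq. Qed.
Theorem mainTheorem9 (eps : R) (Gam : R * R -> Prop)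
  (Heps : Rlt R1 eps) (HGam : subgroup_S1R Gam) (HGamrk : finite_rank Gam)
  (K : rcfType) (G : K * K -> Prop) (A : K -> Prop)
  (gp : R * R -> K * K) (dp : R -> K)
  (HM : model_T eps Gam G A gp dp) :
  let S : K -> Prop :=
    fun x => exists g d, Gam g /\ inDelta eps d /\ x = (dp d * (gp g).1)%R in
  forall a : K,
    (exists k : K, rc_in S k /\ (0 < k)%R /\ is_lambda A (dp eps) k a) <->
    (exists d, inDelta eps d /\ a = dp d).
Proof.
move=> S a.
have HM' := HM; rewrite /model_T /= in HM'.
case: HM' => [HGs [Hdense [HA [HAe [He1 [Hemin [Hlam [Hgp [Hgphom [Hdp [Hdphom [Hor [Hmann Htor]]]]]]]]]]]]].
case: HGam => [HGS1 [HG1 [HGmul HGinv]]].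
case: HA => [HApos [HA1 [HAmul HAinv]]].
have Hc11 : cmulR coneR coneR = coneR.
  rewrite /cmulR /coneR /=; f_equal; Lra.lra.
have gp1 : gp coneR = (1, 0).
  have H := Hgphom _ _ HG1 HG1; rewrite Hc11 in H.
  have Hz := HGs.1 _ (Hgp _ HG1).
  move: H Hz; case: (gp coneR) => z1 z2; rewrite /cmulK /onS1K /= => -[H1 H2] Hz.
  have Ez2 : z2 = 0.
    have h : z2 * (1 - 2 * z1) = 0 by rewrite mulrBr mulr1 {1}H2; ring.
    move/eqP: h; rewrite mulf_eq0 => /orP[/eqP //|/eqP h].
    exfalso; rewrite expr2 in Hz; nra.
  rewrite Ez2 in H1 Hz *.
  have Ez1 : z1 = 1.
    have h : z1 * (z1 - 1) = 0 by rewrite mulrBr mulr1 {3}H1; ring.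
    move/eqP: h; rewrite mulf_eq0 => /orP[/eqP h|]; last by rewrite subr_eq0 => /eqP.
    by exfalso; move: Hz; rewrite h; rewrite expr0n /= add0r => /eqP; rewrite eq_sym oner_eq0.
  by rewrite Ez1.
have HDin : forall z, inDelta eps (powerRZ eps z) by move=> z; exists z.
have eps0 : eps <> R0 by Lra.lra.
have dp1 : dp R1 = 1.
  have H := Hdphom R1 R1 (HDin Z0) (HDin Z0); rewrite Rmult_1_l in H.
  have H0 : 0 < dp R1 := HApos _ (Hdp _ (HDin Z0)).
  have h : dp R1 * (dp R1 - 1) = 0 by rewrite mulrBr mulr1 -H subrr.
  move/eqP: h; rewrite mulf_eq0 => /orP[/eqP h|]; last by rewrite subr_eq0 => /eqP.
  by move: H0; rewrite h ltxx.
pose D z := dp (powerRZ eps z).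
have HDadd : forall z1 z2, D (Z.add z1 z2) = D z1 * D z2.
  by move=> z1 z2; rewrite /D powerRZ_add //; apply: Hdphom.
have HD0 : D Z0 = 1 by exact: dp1.
have HD1 : D (Zpos xH) = dp eps by rewrite /D (powerRZ_1 eps).
have HDpos : forall z, 0 < D z by move=> z; apply: HApos; apply: Hdp.
pose DN (N : nat) := D (Z.of_nat N).
have HDNadd : forall N m, DN (N + m)%N = DN N * DN m.
  move=> N m; rewrite /DN -HDadd; congr D; exact: Nat2Z.inj_add.
have HDNge1 : forall m, 1 <= DN m.
  elim=> [|m IH]; first by rewrite /DN /= HD0.
  rewrite /DN Nat2Z.inj_succ -Z.add_1_r HDadd HD1.
  have := HDpos (Z.of_nat m); rewrite -/(D _) -/(DN m) => h.
  nra.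
have HDNmono : forall N m, (N <= m)%N -> DN N <= DN m.
  move=> N m Hle; rewrite -(subnK Hle) addnC HDNadd.
  have := HDNge1 (m - N)%N; have := HDpos (Z.of_nat N); rewrite -/(D _) -/(DN N); nra.
have HU : forall k b c, is_lambda A (dp eps) k b -> is_lambda A (dp eps) k c -> b = c.
  move=> k b c [Ab [Hb1 Hb2]] [Ac [Hc1 Hc2]].
  have b0 := HApos _ Ab; have c0 := HApos _ Ac.
  have key : forall u v, A u -> A v -> u <= k -> k < u * dp eps -> v <= k -> ~ (u < v).
    move=> u v Au Av Hu1 Hu2 Hv1 Huv.
    have u0 := HApos _ Au.
    have Hvu : A (v * u^-1) := HAmul _ _ Av (HAinv _ Au).
    have h1 : 1 < v * u^-1 by rewrite ltr_pdivlMr // mul1r.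
    have := Hemin _ Hvu h1; rewrite ler_pdivlMr // => h2.
    rewrite mulrC in h2; lra.
  case: (ltgtP b c) => // h; exfalso.
  - exact: (key b c).
  - exact: (key c b).
have Hnat : forall n : nat, gen_field S n%:R.
  elim=> [|n IH]; first exact: gf_zero.
  by rewrite mulrS; apply: gf_add => //; exact: gf_one.
split; last first.
  move=> [d [Hd ->]]; exists (dp d); split; last split.
  - exists ('X - (dp d)%:P); split; first by rewrite polyXsubC_eq0.
    split; last by rewrite root_XsubC.
    move=> i; rewrite coefB coefX coefC; apply: gf_add; first exact: Hnat.
    apply: gf_opp; case: (i == 0)%N; last exact: gf_zero.
    apply: gf_base; exists coneR, d; split=> //; split=> //.
    by rewrite gp1 /= mulr1.
  - exact: HApos (Hdp _ Hd).
  - split; first exact: Hdp.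
    split=> //; rewrite ltr_pMr //; exact: HApos (Hdp _ Hd).
pose vK (g : nat -> R * R) (d : nat -> R) := fun i => dp (d i) * (gp (g i)).1.
pose vR (g : nat -> R * R) (d : nat -> R) := fun i => Rmult (d i) (g i).1.
have Htr : forall g d Q, (forall i, Gam (g i)) -> (forall i, inDelta eps (d i)) ->
    (evalK (vK g d) Q = 0 <-> evalR (vR g d) Q = R0).
  move=> g d Q Hg Hd.
  have H1 := Hor Q g d Hg Hd; have H2 := Hor (ZPNeg Q) g d Hg Hd.
  rewrite /= -/(vK g d) -/(vR g d) in H1 H2 *.
  split=> H.
  - rewrite H oppr0 ltxx in H1 H2.
    case: (Rtotal_order (evalR (vR g d) Q) R0) => [h|[h|h]] //; exfalso.
    + by have := proj2 H2 (Ropp_0_gt_lt_contravar _ h).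
    + by have := proj2 H1 h.
  - rewrite H in H1 H2.
    case: (ltgtP (evalK (vK g d) Q) 0) => // h; exfalso.
    + have := proj1 H2; rewrite oppr_gt0 => /(_ h); Lra.lra.
    + have := proj1 H1 h; Lra.lra.
pose Rep (x : K) := exists g d P Q, (forall i, Gam (g i)) /\ (forall i, inDelta eps (d i)) /\
   evalK (vK g d) Q != 0 /\ x = evalK (vK g d) P / evalK (vK g d) Q.
have HDin1 : inDelta eps R1 by exists Z0.
have Rep0 : Rep 0.
  exists (fun _ => coneR), (fun _ => R1), (ZPAdd ZPOne (ZPNeg ZPOne)), ZPOne.
  by split=> //; split=> //=; split; [rewrite oner_eq0 | rewrite subrr mul0r].
have Hmerge : forall g1 d1 g2 d2, (forall i, Gam (g1 i)) -> (forall i, inDelta eps (d1 i)) ->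
    (forall i, Gam (g2 i)) -> (forall i, inDelta eps (d2 i)) ->
    exists g d, (forall i, Gam (g i)) /\ (forall i, inDelta eps (d i)) /\
     (forall P, evalK (vK g d) (zren (fun i => i.*2) P) = evalK (vK g1 d1) P) /\
     (forall P, evalK (vK g d) (zren (fun i => i.*2.+1) P) = evalK (vK g2 d2) P).
  move=> g1 d1 g2 d2 Hg1 Hd1 Hg2 Hd2.
  exists (fun i => if odd i then g2 i./2 else g1 i./2), (fun i => if odd i then d2 i./2 else d1 i./2).
  split; first by move=> i; case: (odd i).
  split; first by move=> i; case: (odd i).
  split=> P; rewrite evalK_ren; apply: evalK_ext => i /=.
  - by rewrite /vK odd_double half_double.
  - by rewrite /vK oddS odd_double /= uphalf_double.
have RepG : forall x, gen_field S x -> Rep x.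
  move=> x; elim=> {x}.
  - move=> x [g0 [d0 [Hg0 [Hd0 ->]]]].
    exists (fun _ => g0), (fun _ => d0), (ZPVar 0), ZPOne.
    by split=> //; split=> //=; split; [rewrite oner_eq0 | rewrite divr1].
  - exact: Rep0.
  - exists (fun _ => coneR), (fun _ => R1), ZPOne, ZPOne.
    by split=> //; split=> //=; split; [rewrite oner_eq0 | rewrite divr1].
  - move=> x y _ [g1 [d1 [P1 [Q1 [Hg1 [Hd1 [Hq1 ->]]]]]]] _ [g2 [d2 [P2 [Q2 [Hg2 [Hd2 [Hq2 ->]]]]]]].
    have [g [d [Hg [Hd [E1 E2]]]]] := Hmerge _ _ _ _ Hg1 Hd1 Hg2 Hd2.
    exists g, d, (ZPAdd (ZPMul (zren (fun i => i.*2) P1) (zren (fun i => i.*2.+1) Q2))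
                       (ZPMul (zren (fun i => i.*2.+1) P2) (zren (fun i => i.*2) Q1))),
              (ZPMul (zren (fun i => i.*2) Q1) (zren (fun i => i.*2.+1) Q2)).
    split=> //; split=> //=; rewrite !E1 !E2; split; first by rewrite mulf_neq0.
    by field; apply/andP; split.
  - move=> x _ [g1 [d1 [P1 [Q1 [Hg1 [Hd1 [Hq1 ->]]]]]]].
    exists g1, d1, (ZPNeg P1), Q1.
    by split=> //; split=> //=; split=> //; rewrite mulNr.
  - move=> x y _ [g1 [d1 [P1 [Q1 [Hg1 [Hd1 [Hq1 ->]]]]]]] _ [g2 [d2 [P2 [Q2 [Hg2 [Hd2 [Hq2 ->]]]]]]].
    have [g [d [Hg [Hd [E1 E2]]]]] := Hmerge _ _ _ _ Hg1 Hd1 Hg2 Hd2.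
    exists g, d, (ZPMul (zren (fun i => i.*2) P1) (zren (fun i => i.*2.+1) P2)),
              (ZPMul (zren (fun i => i.*2) Q1) (zren (fun i => i.*2.+1) Q2)).
    split=> //; split=> //=; rewrite !E1 !E2; split; first by rewrite mulf_neq0.
    by field; apply/andP; split.
  - move=> x _ [g1 [d1 [P1 [Q1 [Hg1 [Hd1 [Hq1 ->]]]]]]].
    have [Hp|Hp] := eqVneq (evalK (vK g1 d1) P1) 0.
      by rewrite Hp mul0r invr0.
    exists g1, d1, Q1, P1.
    by split=> //; split=> //; split=> //; rewrite invf_div.
pose bnd (x : K) (N : nat) := `|x| < DN N /\ (x != 0 -> 1 < `|x| * DN N).
have Heps0 : Rle R0 eps by Lra.lra.
have Habs : Rgt (Rabs eps) R1 by rewrite Rabs_pos_eq.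
have Bound : forall x, Rep x -> exists N, bnd x N.
  move=> x [g [d [P [Q [Hg [Hd [Hq ->]]]]]]].
  set pK := evalK (vK g d) P; set qK := evalK (vK g d) Q.
  set pR := evalR (vR g d) P; set qR := evalR (vR g d) Q.
  have HqR : qR <> R0 by move=> h; move/negP: Hq; apply; apply/eqP; apply/(Htr _ _ _ Hg Hd).
  have HpR : pK != 0 -> pR <> R0 by move=> Hp h; move/negP: Hp; apply; apply/eqP; apply/(Htr _ _ _ Hg Hd).
  have [N1 HN1] := Pow_x_infinity eps Habs (Rdiv (Rplus (Rmult pR pR) R1) (Rmult qR qR)).
  have [N2 HN2] := Pow_x_infinity eps Habs (Rdiv (Rplus (Rmult qR qR) R1) (Rmult pR pR)).
  have [N3 HN3] := Pow_x_infinity eps Habs R1.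
  pose N := Nat.max N1 (Nat.max N2 N3).
  have Eq : forall n, Rabs (pow eps n) = pow eps n by move=> n; rewrite Rabs_pos_eq //; apply: pow_le.
  have HE1 := HN1 N ltac:(Psatz.lia); have HE2 := HN2 N ltac:(Psatz.lia); have HE3 := HN3 N ltac:(Psatz.lia).
  rewrite Eq in HE1 HE2 HE3.
  rewrite pow_powerRZ in HE1 HE2 HE3.
  set E := powerRZ eps (Z.of_nat N) in HE1 HE2 HE3.
  have qq : Rlt R0 (Rmult qR qR) by Psatz.nra.
  have real1 : Rlt R0 (Rplus (Rmult (Rmult (Rmult E R1) (Rmult E R1)) (Rmult qR qR)) (Ropp (Rmult pR pR))).
    have h : Rle (Rplus (Rmult pR pR) R1) (Rmult E (Rmult qR qR)).
      have := Rmult_le_compat_r _ _ _ (Rlt_le _ _ qq) (Rge_le _ _ HE1).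
      rewrite /Rdiv Rmult_assoc Rinv_l ?Rmult_1_r //; Lra.lra.
    rewrite !Rmult_1_r; Psatz.nra.
  have real2 : pK != 0 -> Rlt R0 (Rplus (Rmult (Rmult (Rmult E R1) (Rmult E R1)) (Rmult pR pR)) (Ropp (Rmult qR qR))).
    move=> /HpR hp.
    have pp : Rlt R0 (Rmult pR pR) by Psatz.nra.
    have h : Rle (Rplus (Rmult qR qR) R1) (Rmult E (Rmult pR pR)).
      have := Rmult_le_compat_r _ _ _ (Rlt_le _ _ pp) (Rge_le _ _ HE2).
      rewrite /Rdiv Rmult_assoc Rinv_l ?Rmult_1_r //; Lra.lra.
    rewrite !Rmult_1_r; Psatz.nra.
  pose g' i := match i with O => coneR | S j => g j end.
  pose d' i := match i with O => E | S j => d j end.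
  have Hg' : forall i, Gam (g' i) by case.
  have Hd' : forall i, inDelta eps (d' i) by case=> [|i]; [exact: (HDin (Z.of_nat N)) | exact: Hd].
  have T1 := proj2 (Hor (ZPAdd (ZPMul (ZPMul (ZPVar 0) (ZPVar 0)) (ZPMul (zren succn Q) (zren succn Q)))
                         (ZPNeg (ZPMul (zren succn P) (zren succn P)))) g' d' Hg' Hd').
  have T2 := proj2 (Hor (ZPAdd (ZPMul (ZPMul (ZPVar 0) (ZPVar 0)) (ZPMul (zren succn P) (zren succn P)))
                         (ZPNeg (ZPMul (zren succn Q) (zren succn Q)))) g' d' Hg' Hd').
  rewrite /= !evalR_ren !evalK_ren /= gp1 /= mulr1 in T1 T2.
  have K1 := T1 real1.
  exists N; split.
  - apply: boundK => //; first exact: HDpos.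
  - move=> hx; apply: boundK2 => //; first by move: hx; apply: contra => /eqP ->; rewrite mul0r.
    + exact: HDpos.
    + apply: T2; apply: real2; by move: hx; apply: contra => /eqP ->; rewrite mul0r.
have bndmono : forall x N N', (N <= N')%N -> bnd x N -> bnd x N'.
  move=> x N N' hN [h1 h2]; have hm := HDNmono _ _ hN; split.
  - exact: lt_le_trans h1 hm.
  - move=> hx; apply: (lt_le_trans (h2 hx)); apply: ler_wpM2l => //.
have Hcomb : forall c : nat -> K, (forall i, exists N, bnd (c i) N) ->
    forall n, exists N, forall i, (i <= n)%N -> bnd (c i) N.
  move=> c Hc; elim=> [|n [N1 IH]].
    have [N HN] := Hc 0%N; exists N => i; rewrite leqn0 => /eqP ->; exact: HN.
  have [N2 HN2] := Hc n.+1; exists (maxn N1 N2) => i; rewrite leq_eqVlt => /orP[/eqP ->|hi].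
  - apply: bndmono HN2; exact: leq_maxr.
  - apply: (bndmono _ N1); [exact: leq_maxl | apply: IH; by rewrite -ltnS].
move=> [k [[p [pn0 [pgen proot]]] [k0 Hlamk]]].
pose n := (size p).-1.
have Hsz : size p = n.+1 by rewrite /n prednK // size_poly_gt0.
have [N HN] := Hcomb (fun i => p`_i) (fun i => Bound _ (RepG _ (pgen i))) n.
have Hsum : \sum_(i < n.+1) p`_i * k ^+ i = 0.
  by have := rootP proot; rewrite horner_coef Hsz.
have Hnz : exists i, (i <= n)%N /\ p`_i != 0.
  by exists n; rewrite leqnn /n -lead_coefE lead_coef_eq0.
have B0 : 0 < DN N := HDpos _.
have HB1 := HDNge1 N.
have Hup := @UB K n (fun i => p`_i) k (DN N) k0 B0 HN Hnz Hsum.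
have Hlo := @LB K n (fun i => p`_i) k (DN N) k0 B0 HN Hnz Hsum.
have [N2 [HN2 _]] := Bound _ (RepG _ (Hnat n.+1)).
have Hn1 : (n.+1)%:R = 1 + n%:R :> K by rewrite mulrS.
rewrite Hn1 ger0_norm in HN2; last by rewrite addr_ge0 // ler0n.
have Hn0 : 0 <= n%:R :> K by rewrite ler0n.
set T := (N2 + N + N)%N.
have HT : DN T = DN N2 * DN N * DN N by rewrite /T !HDNadd.
have HD2 := HDpos (Z.of_nat N2).
have HBT : 1 + n%:R * DN N ^+ 2 < DN T.
  rewrite HT expr2.
  have h1 : 1 + n%:R * (DN N * DN N) <= (1 + n%:R) * (DN N * DN N) by nra.
  apply: (le_lt_trans h1); rewrite -mulrA ltr_pM2r //; nra.
have Hk1 : k < DN T := lt_trans Hup HBT.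
have Hk2 : k^-1 < DN T := lt_trans Hlo HBT.
have HDT := HDpos (Z.of_nat T).
have Hinv : D (Z.opp (Z.of_nat T)) = (DN T)^-1.
  apply: (mulIf (lt0r_neq0 HDT)); rewrite mulVf ?(lt0r_neq0 HDT) //.
  by rewrite /DN -HDadd Z.add_opp_diag_l.
have Hk3 : D (Z.opp (Z.of_nat T)) < k.
  by rewrite Hinv -invf_plt ?posrE.
have Hsearch : forall m : nat, k < D (Z.add (Z.opp (Z.of_nat T)) (Z.of_nat m)) ->
    exists z, D z <= k /\ k < D z * dp eps.
  elim=> [|m IH].
    by rewrite Z.add_0_r => h; exfalso; move: (lt_trans Hk3 h); rewrite ltxx.
  rewrite Nat2Z.inj_succ -Z.add_1_r Z.add_assoc HDadd HD1 => h.
  have [h2|h2] := ltP k (D (Z.add (Z.opp (Z.of_nat T)) (Z.of_nat m))).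
  - exact: IH.
  - by exists (Z.add (Z.opp (Z.of_nat T)) (Z.of_nat m)).
have [z [Hz1 Hz2]] : exists z, D z <= k /\ k < D z * dp eps.
  apply: (Hsearch (T + T)%N).
  have -> : (Z.add (Z.opp (Z.of_nat T)) (Z.of_nat (T + T))) = Z.of_nat T by rewrite (Nat2Z.inj_add T T); ring_simplify.
  exact: Hk1.
exists (powerRZ eps z); split; first exact: HDin.
apply: (HU k) => //; split; first exact: Hdp.
by split.
Qed.
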